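(* For every integer $k\geq 3$, there is a deterministic distributed dynamic data structure for $k$-clique membership listing which handles edge insertions and deletions in $O(1)$ amortized rounds.
   Context: Highly dynamic network model: a synchronous network on a fixed set $V$ of $n$ nodes with unique identifiers starts as the empty graph; at the beginning of round $i$ the graph is $G_i=(V,E_i)$, obtained from the previous graph by an adversary inserting and/or deleting an arbitrary (unbounded) set of edges. At the start of each round every node is notified only of the insertions/deletions of edges incident to it; then each node may send a message of $O(\log n)$ bits to each of its current neighbors. A distributed dynamic data structure consists of a local part $DS_v$ at each node $v$; at the end of every round, $DS_v$ may be queried and must answer immediately, without any further communication, either with a correct answer to the query or with $\texttt{inconsistent}$. The amortized round complexity is at most $c$ if for every round $i$, the number of rounds up to round $i$ in which at least one node $v$ has $DS_v$ in an inconsistent state, divided by the total number of topology changes that occurred up to round $i$, is at most $c$. $k$-clique membership listing: $DS_v$ at each node $v$ must respond at the end of round $i$ to a query consisting of a $k$-element node set $\{v_1,\dots,v_k\}$ containing $v$ with $\texttt{true}$ if it forms a $k$-clique in $G_i$, $\texttt{false}$ if it does not, or $\texttt{inconsistent}$. *)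

(* Defs.v *)
From mathcomp Require Import all_boot.
Set Implicit Arguments.
Unset Strict Implicit.
Unset Printing Implicit Defensive.

(* A dynamic graph on the node set 'I_n (node identifiers 0..n-1):
   E i is the adjacency relation of G_i; G_0 is the empty graph. *)
Definition dyn_graph (n : nat) := nat -> rel 'I_n.

Definition valid_dyn_graph (n : nat) (E : dyn_graph n) : Prop :=
  (forall u w, E 0 u w = false) /\
  (forall i, symmetric (E i)) /\ (forall i, irreflexive (E i)).

Definition changes (n : nat) (E : dyn_graph n) (i : nat) : nat :=
  #|[set e : 'I_n * 'I_n | (e.1 < e.2) && (E i.-1 e.1 e.2 != E i e.1 e.2)]|.

Definition total_changes (n : nat) (E : dyn_graph n) (i : nat) : nat :=
  \sum_(1 <= j < i.+1) changes E j.

(* Each node v starts in state [init v]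
   (so it knows its identifier).  In round i, each node is first notified of
   the sets of inserted and deleted incident edges (given by the other
   endpoint), then sends [send s u] to each current neighbour u, then updates
   its state from the messages received from its current neighbours.  At the
   end of the round, [answer s Q] answers a query Q locally:
   Some true / Some false, or None = "inconsistent". *)
Record dyn_alg (n B : nat) := DynAlg {
  state : Type;
  init : 'I_n -> state;
  notify : state -> {set 'I_n} -> {set 'I_n} -> state;
  send : state -> 'I_n -> seq bool;
  send_bound : forall s u, size (send s u) <= B;
  recv : state -> ('I_n -> option (seq bool)) -> state;
  answer : state -> {set 'I_n} -> option bool
}.

Fixpoint exec (n B : nat) (A : dyn_alg n B) (E : dyn_graph n) (i : nat)
  : 'I_n -> state A :=
  match i with
  | 0 => init A
  | j.+1 =>
      let prev := exec A E j in
      let s1 := fun v => notify (prev v)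
                  [set u | E j.+1 v u && ~~ E j v u]
                  [set u | ~~ E j.+1 v u && E j v u] in
      fun v => recv (s1 v)
                 (fun u => if E j.+1 u v then Some (send (s1 u) v) else None)
  end.

Definition is_clique (n : nat) (G : rel 'I_n) (Q : {set 'I_n}) : bool :=
  [forall u in Q, forall w in Q, (u != w) ==> G u w].

Definition round_inconsistent (n B k : nat) (A : dyn_alg n B) (E : dyn_graph n)
  (i : nat) : bool :=
  [exists v : 'I_n, exists Q : {set 'I_n},
     (v \in Q) && (#|Q| == k) && (answer (exec A E i v) Q == None)].

Definition inconsistent_rounds (n B k : nat) (A : dyn_alg n B) (E : dyn_graph n)
  (i : nat) : nat :=
  \sum_(1 <= j < i.+1) (round_inconsistent k A E j : nat).

Definition kclique_correct (n B k : nat) (A : dyn_alg n B) (E : dyn_graph n) : Prop :=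
  forall (i : nat) (v : 'I_n) (Q : {set 'I_n}) (b : bool),
    v \in Q -> #|Q| = k -> answer (exec A E i v) Q = Some b ->
    b = is_clique (E i) Q.

(* Main.v *)
Require Import Defs.
From mathcomp Require Import all_boot.
From mathcomp Require Import zify.
Set Implicit Arguments. Unset Strict Implicit. Unset Printing Implicit Defensive.

Fixpoint enc (L y : nat) : seq bool :=
  if L is L'.+1 then odd y :: enc L' y./2 else [::].
Fixpoint dec (s : seq bool) : nat :=
  if s is b :: s' then b + (dec s').*2 else 0.
Lemma size_enc L y : size (enc L y) = L.
Proof. by elim: L y => //= L IH y; rewrite IH. Qed.
Lemma dec_enc L y : y < 2 ^ L -> dec (enc L y) = y.
Proof.
elim: L y => [|L IH] y /=; first by rewrite expn0 ltnS leqn0 => /eqP->.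
move=> hy; rewrite IH ?odd_double_half //.
by rewrite ltn_half_double -mul2n -expnS.
Qed.

Record nst (n : nat) := NSt { me : 'I_n; nb : {set 'I_n}; kn : 'I_n -> 'I_n -> bool;
  sq : 'I_n -> {set 'I_n}; evq : 'I_n -> {set 'I_n}; sentev : bool; flg : bool }.

Definition hd_ n (s : nst n) u : option 'I_n :=
  if evq s u != set0 then [pick y in evq s u] else [pick y in sq s u].
Definition hset n (s : nst n) u : {set 'I_n} :=
  if hd_ s u is Some y then [set y] else set0.
Definition snd_ n (s : nst n) u : seq bool :=
  [:: 1 < #|sq s u|; isSome (hd_ s u); evq s u != set0;
      if hd_ s u is Some y then y \in nb s else false]
  ++ enc (trunc_log 2 n).+1 (if hd_ s u is Some y then val y else 0).

Definition mtopic (n : nat) (m : option (seq bool)) : option 'I_n :=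
  if m is Some (_ :: true :: _ :: _ :: r) then insub (dec r) else None.
Definition mkind (m : option (seq bool)) :=
  if m is Some (_ :: _ :: k :: _) then k else false.
Definition mstat (m : option (seq bool)) :=
  if m is Some (_ :: _ :: _ :: st :: _) then st else false.
Definition mmore (m : option (seq bool)) :=
  if m is Some (mo :: _) then mo else false.

Definition nnotify n (s : nst n) (ins del : {set 'I_n}) : nst n :=
  let N' := (nb s :|: ins) :\: del in
  let ch := ins :|: del in
  NSt (me s) N' (kn s)
    (fun b => if b \in N' then sq s b :|: (ch :\ b) else set0)
    (fun b => if b \in N' then evq s b :|: (ch :\ b) else set0)
    (sentev s) (flg s).

Definition nrecv n (s : nst n) (msgs : 'I_n -> option (seq bool)) : nst n :=
  NSt (me s) (nb s)
   (fun x w => if mtopic n (msgs x) == Some w then mstat (msgs x)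
               else if mtopic n (msgs w) == Some x then mstat (msgs w)
               else kn s x w)
   (fun b => if b \in nb s then (sq s b :\: hset s b) :|:
        (if mkind (msgs b) then (if mtopic n (msgs b) is Some y then [set y] else set0) else set0)
        else set0)
   (fun b => if b \in nb s then evq s b :\: hset s b else set0)
   [exists b in nb s, evq s b != set0]
   [exists u, mmore (msgs u)].

Definition nclean n (s : nst n) :=
  ~~ (sentev s || flg s || [exists b in nb s, sq s b != set0]).

Definition nanswer n (s : nst n) (Q : {set 'I_n}) : option bool :=
  if ~~ nclean s then None else
  Some ([forall u in Q, (u != me s) ==> (u \in nb s)] &&
        [forall x in Q, forall w in Q, [&& x != me s, w != me s & x != w] ==> kn s x w]).

Definition ninit n (v : 'I_n) : nst n :=
  NSt v set0 (fun _ _ => false) (fun _ => set0) (fun _ => set0) false false.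

Lemma snd_bound n (s : nst n) u : size (snd_ s u) <= 5 * (trunc_log 2 n).+1.
Proof. rewrite size_cat size_enc /=. lia. Qed.

Definition alg n : dyn_alg n (5 * (trunc_log 2 n).+1) :=
  @DynAlg n _ (nst n) (@ninit n) (@nnotify n) (@snd_ n) (@snd_bound n) (@nrecv n) (@nanswer n).

Arguments enc : simpl never.
Arguments dec : simpl never.
Lemma mtopic_snd n (s : nst n) u : mtopic n (Some (snd_ s u)) = hd_ s u.
Proof.
rewrite /snd_ /mtopic /=; case: (hd_ s u) => [y|] //=.
rewrite dec_enc ?valK //.
exact: ltn_trans (ltn_ord y) (trunc_log_ltn _ _).
Qed.

Lemma mstat_snd n (s : nst n) u :
  mstat (Some (snd_ s u)) = if hd_ s u is Some y then y \in nb s else false.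
Proof. by rewrite /snd_ /mstat /=; case: (hd_ s u). Qed.
Lemma mkind_snd n (s : nst n) u : mkind (Some (snd_ s u)) = (evq s u != set0).
Proof. by []. Qed.
Lemma mmore_snd n (s : nst n) u : mmore (Some (snd_ s u)) = (1 < #|sq s u|).
Proof. by []. Qed.

Definition ex n (E : dyn_graph n) t : 'I_n -> nst n := exec (alg n) E t.
Definition n1 n (E : dyn_graph n) t v : nst n :=
  nnotify (ex E t v) [set u | E t.+1 v u && ~~ E t v u] [set u | ~~ E t.+1 v u && E t v u].
Definition msg n (E : dyn_graph n) t u v :=
  if E t.+1 u v then Some (snd_ (n1 E t u) v) else None.
Lemma ex_succ n (E : dyn_graph n) t v :
  ex E t.+1 v = nrecv (n1 E t v) (fun u => msg E t u v).
Proof. reflexivity. Qed.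
Lemma ex0 n (E : dyn_graph n) v : ex E 0 v = ninit v.
Proof. reflexivity. Qed.

Definition chg n (E : dyn_graph n) t v := [set u | E t.+1 v u != E t v u].

Lemma nb_n1 n (E : dyn_graph n) t v :
  nb (ex E t v) = [set u | E t v u] -> nb (n1 E t v) = [set u | E t.+1 v u].
Proof.
move=> Hn; rewrite /n1 /nnotify /= Hn.
by apply/setP => u; rewrite !inE; case: (E t.+1 v u); case: (E t v u).
Qed.
Lemma ch_eq n (E : dyn_graph n) t v :
  [set u | E t.+1 v u & ~~ E t v u] :|: [set u | ~~ E t.+1 v u & E t v u] = chg E t v.
Proof. by apply/setP => u; rewrite !inE; case: (E t.+1 v u); case: (E t v u). Qed.
Lemma sq_n1 n (E : dyn_graph n) t v b :
  nb (ex E t v) = [set u | E t v u] ->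
  sq (n1 E t v) b = if E t.+1 v b then sq (ex E t v) b :|: (chg E t v :\ b) else set0.
Proof.
move=> Hn; have := nb_n1 Hn; rewrite /n1 /nnotify /= => ->.
by rewrite inE ch_eq.
Qed.
Lemma evq_n1 n (E : dyn_graph n) t v b :
  nb (ex E t v) = [set u | E t v u] ->
  evq (n1 E t v) b = if E t.+1 v b then evq (ex E t v) b :|: (chg E t v :\ b) else set0.
Proof.
move=> Hn; have := nb_n1 Hn; rewrite /n1 /nnotify /= => ->.
by rewrite inE ch_eq.
Qed.
Lemma me_n1 n (E : dyn_graph n) t v : me (n1 E t v) = me (ex E t v).
Proof. by []. Qed.

Lemma me_recv n (s : nst n) m : me (nrecv s m) = me s. Proof. by []. Qed.
Lemma nb_recv n (s : nst n) m : nb (nrecv s m) = nb s. Proof. by []. Qed.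
Lemma kn_recv n (s : nst n) m x w : kn (nrecv s m) x w =
  if mtopic n (m x) == Some w then mstat (m x)
  else if mtopic n (m w) == Some x then mstat (m w) else kn s x w.
Proof. by []. Qed.
Lemma sq_recv n (s : nst n) m b : sq (nrecv s m) b =
  if b \in nb s then (sq s b :\: hset s b) :|:
        (if mkind (m b) then (if mtopic n (m b) is Some y then [set y] else set0) else set0)
        else set0.
Proof. by []. Qed.
Lemma evq_recv n (s : nst n) m b : evq (nrecv s m) b =
  if b \in nb s then evq s b :\: hset s b else set0.
Proof. by []. Qed.
Lemma sentev_recv n (s : nst n) m : sentev (nrecv s m) = [exists b in nb s, evq s b != set0].
Proof. by []. Qed.
Lemma flg_recv n (s : nst n) m : flg (nrecv s m) = [exists u, mmore (m u)].
Proof. by []. Qed.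

Lemma basic n (E : dyn_graph n) (HE : valid_dyn_graph E) t v :
  [/\ me (ex E t v) = v, nb (ex E t v) = [set u | E t v u] &
      forall b, evq (ex E t v) b \subset sq (ex E t v) b].
Proof.
case: HE => H0 [Hs Hi].
elim: t v => [|t IH] v.
  rewrite ex0 /ninit /=; split => //; apply/setP => u; by rewrite !inE H0.
have [Hm Hn Hsub] := IH v.
rewrite ex_succ me_recv nb_recv; split => //; first exact: nb_n1.
move=> b; rewrite sq_recv evq_recv (nb_n1 Hn) inE sq_n1 // evq_n1 //.
case: (E t.+1 v b); last by rewrite sub0set.
apply: subset_trans (subsetUl _ _).
by apply: setSD; apply: setSU.
Qed.

Lemma hd_in n (s : nst n) u y : evq s u \subset sq s u -> hd_ s u = Some y ->
  y \in sq s u /\ ((evq s u != set0) -> y \in evq s u).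
Proof.
move=> hsub; rewrite /hd_; case: ifP => hne.
  case: pickP => // z hz [<-]; split => //; exact: (subsetP hsub).
by case: pickP => // z hz [<-]; split => //; rewrite hne.
Qed.

Lemma hd_none n (s : nst n) u : evq s u \subset sq s u -> hd_ s u = None -> sq s u = set0.
Proof.
move=> hsub; rewrite /hd_; case: ifP => hne.
  case: pickP => // h _; case/set0Pn: hne => z hz; move: (h z); by rewrite /= hz.
case: pickP => // h _; apply/setP => z; move: (h z); rewrite /= inE; by case: (z \in sq s u).
Qed.

Lemma card_pop_sq n (s : nst n) u : evq s u \subset sq s u ->
  #|sq s u :\: hset s u| = #|sq s u| - 1.
Proof.
move=> hsub; rewrite /hset; case h: (hd_ s u) => [y|].
  have [hy _] := hd_in hsub h; rewrite (cardsD1 y (sq s u)) hy /=; by rewrite addKn.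
by rewrite (hd_none hsub h) set0D cards0.
Qed.

Lemma card_pop_evq n (s : nst n) u : evq s u \subset sq s u ->
  #|evq s u :\: hset s u| = #|evq s u| - 1.
Proof.
move=> hsub; case: (eqVneq (evq s u) set0) => [->|hne]; first by rewrite set0D cards0.
rewrite /hset; case h: (hd_ s u) => [y|].
  have [_ hy] := hd_in hsub h; by rewrite (cardsD1 y (evq s u)) (hy hne) /= addKn.
have := hd_none hsub h => hs.
case/set0Pn: hne => z hz; have := subsetP hsub z hz; by rewrite hs inE.
Qed.

Lemma msg_some n (E : dyn_graph n) t u v : E t.+1 u v -> msg E t u v = Some (snd_ (n1 E t u) v).
Proof. by rewrite /msg => ->. Qed.

Lemma sub_n1 n (E : dyn_graph n) (HE : valid_dyn_graph E) t v b :
  evq (n1 E t v) b \subset sq (n1 E t v) b.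
Proof.
have [_ Hn Hsub] := basic HE t v.
rewrite sq_n1 // evq_n1 //; case: (E t.+1 v b) => //; exact: setSU.
Qed.

Lemma L_stay n (E : dyn_graph n) (HE : valid_dyn_graph E) t a b y :
  E t.+1 a b -> y \in sq (n1 E t a) b -> hd_ (n1 E t a) b != Some y ->
  y \in sq (ex E t.+1 a) b.
Proof.
move=> hab hy hh; have [_ Hn _] := basic HE t a.
rewrite ex_succ sq_recv (nb_n1 Hn) inE hab; apply/setUP; left.
rewrite inE hy andbT /hset; move: hh; case: (hd_ _ _) => [z|] hh //=; last by rewrite inE.
rewrite inE; apply/eqP => e; move: hh; by rewrite e eqxx.
Qed.

Lemma L_ev n (E : dyn_graph n) (HE : valid_dyn_graph E) t a b y :
  E t.+1 a b -> y \in evq (n1 E t a) b ->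
  y \in evq (ex E t.+1 a) b \/ y \in sq (ex E t.+1 b) a.
Proof.
move=> hab hy; have [_ Hna _] := basic HE t a; have [_ Hnb _] := basic HE t b.
have Hs := HE.2.1.
case: (eqVneq (hd_ (n1 E t a) b) (Some y)) => hh.
  right; rewrite ex_succ sq_recv (nb_n1 Hnb) inE (Hs _ b a) hab.
  rewrite msg_some // mkind_snd mtopic_snd hh.
  have -> : (evq (n1 E t a) b != set0) by apply/set0Pn; exists y.
  by apply/setUP; right; rewrite inE.
left; rewrite ex_succ evq_recv (nb_n1 Hna) inE hab inE hy andbT /hset.
move: hh; case: (hd_ _ _) => [z|] hh //=; last by rewrite inE.
rewrite inE; apply/eqP => e; move: hh; by rewrite e eqxx.
Qed.

Definition Inv n (E : dyn_graph n) t := forall v x w, E t v x -> E t v w -> x != w ->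
  kn (ex E t v) x w = E t x w \/ w \in sq (ex E t x) v \/ x \in sq (ex E t w) v \/
  x \in evq (ex E t v) w \/ w \in evq (ex E t v) x.

Lemma sq_n1_old n (E : dyn_graph n) (HE : valid_dyn_graph E) t a b y :
  E t.+1 a b -> y \in sq (ex E t a) b -> y \in sq (n1 E t a) b.
Proof.
move=> hab hy; have [_ Hn _] := basic HE t a.
by rewrite sq_n1 // hab; apply/setUP; left.
Qed.
Lemma evq_n1_old n (E : dyn_graph n) (HE : valid_dyn_graph E) t a b y :
  E t.+1 a b -> y \in evq (ex E t a) b -> y \in evq (n1 E t a) b.
Proof.
move=> hab hy; have [_ Hn _] := basic HE t a.
by rewrite evq_n1 // hab; apply/setUP; left.
Qed.
Lemma sq_n1_new n (E : dyn_graph n) (HE : valid_dyn_graph E) t a b y :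
  E t.+1 a b -> E t.+1 a y != E t a y -> y != b -> y \in sq (n1 E t a) b.
Proof.
move=> hab hy hyb; have [_ Hn _] := basic HE t a.
by rewrite sq_n1 // hab; apply/setUP; right; rewrite !inE hyb hy.
Qed.
Lemma evq_n1_new n (E : dyn_graph n) (HE : valid_dyn_graph E) t a b y :
  E t.+1 a b -> E t.+1 a y != E t a y -> y != b -> y \in evq (n1 E t a) b.
Proof.
move=> hab hy hyb; have [_ Hn _] := basic HE t a.
by rewrite evq_n1 // hab; apply/setUP; right; rewrite !inE hyb hy.
Qed.

Lemma neq_of_E n (E : dyn_graph n) (HE : valid_dyn_graph E) t a b : E t a b -> a != b.
Proof. by move=> h; apply/eqP => e; move: h; rewrite e HE.2.2. Qed.

Lemma Inv_all n (E : dyn_graph n) (HE : valid_dyn_graph E) t : Inv E t.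
Proof.
have Hs := HE.2.1.
elim: t => [|t IH] v x w.
  by rewrite HE.1.
move=> hvx hvw hxw.
have hxv : E t.+1 x v by rewrite Hs.
have hwv : E t.+1 w v by rewrite Hs.
have nvx := neq_of_E HE hvx; have nvw := neq_of_E HE hvw.
have [_ Hnv _] := basic HE t v; have [_ Hnx _] := basic HE t x.
have [_ Hnw _] := basic HE t w.
rewrite {1}ex_succ kn_recv (msg_some hxv) (msg_some hwv) !mtopic_snd !mstat_snd.
case: (eqVneq (hd_ (n1 E t x) v) (Some w)) => h1.
  by left; rewrite h1 (nb_n1 Hnx) inE.
case: (eqVneq (hd_ (n1 E t w) v) (Some x)) => h2.
  by left; rewrite h2 (nb_n1 Hnw) inE Hs.
have -> : kn (n1 E t v) x w = kn (ex E t v) x w by [].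
case hc: (E t.+1 x w != E t x w).
  right; left; apply: L_stay => //; apply: sq_n1_new => //; by rewrite eq_sym.
case hx: (E t v x); last first.
  have : x \in evq (n1 E t v) w.
    by apply: evq_n1_new => //; rewrite hvx hx.
  case/(L_ev HE hvw) => h; [by do 3 right; left | by right; right; left].
case hw: (E t v w); last first.
  have : w \in evq (n1 E t v) x.
    by apply: evq_n1_new => //; [rewrite hvw hw | rewrite eq_sym].
  case/(L_ev HE hvx) => h; [by do 4 right | by right; left].
move/negbT: hc; rewrite negbK => /eqP hc.
case: (IH v x w hx hw hxw) => [hk | [h | [h | [h | h]]]].
- by left; rewrite hk hc.
- by right; left; apply: L_stay => //; apply: sq_n1_old.
- by right; right; left; apply: L_stay => //; apply: sq_n1_old.
- have : x \in evq (n1 E t v) w by apply: evq_n1_old.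
  case/(L_ev HE hvw) => h'; [by do 3 right; left | by right; right; left].
- have : w \in evq (n1 E t v) x by apply: evq_n1_old.
  case/(L_ev HE hvx) => h'; [by do 4 right | by right; left].
Qed.

Lemma sq_next_flag n (E : dyn_graph n) (HE : valid_dyn_graph E) t x v :
  E t.+1 x v -> sq (ex E t.+1 x) v != set0 -> flg (ex E t.+1 v) || sentev (ex E t.+1 v).
Proof.
move=> hxv; have [_ Hnx _] := basic HE t x; have [_ Hnv _] := basic HE t v.
rewrite ex_succ sq_recv (nb_n1 Hnx) inE hxv; case/set0Pn => y /setUP [h | h].
  apply/orP; left; rewrite ex_succ flg_recv; apply/existsP; exists x.
  rewrite (msg_some hxv) mmore_snd.
  have : 0 < #|sq (n1 E t x) v :\: hset (n1 E t x) v| by apply/card_gt0P; exists y.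
  rewrite card_pop_sq; last exact: sub_n1.
  lia.
apply/orP; right; rewrite ex_succ sentev_recv; apply/existsP; exists x.
have hvx : E t.+1 v x by rewrite HE.2.1.
rewrite (nb_n1 Hnv) inE hvx /=.
move: h; rewrite (msg_some hvx) mkind_snd; case: ifP => //.
by rewrite inE.
Qed.

Lemma kn_correct n (E : dyn_graph n) (HE : valid_dyn_graph E) t v x w :
  nclean (ex E t v) -> E t v x -> E t v w -> x != w -> kn (ex E t v) x w = E t x w.
Proof.
case: t => [|t]; first by rewrite HE.1.
move=> hcl hvx hvw hxw.
have [_ Hnv Hsub] := basic HE t.+1 v.
move: hcl; rewrite /nclean => hcl.
have nfs : ~~ (flg (ex E t.+1 v) || sentev (ex E t.+1 v)).
  by move: hcl; case: (flg _); case: (sentev _).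
have nex : forall b, E t.+1 v b -> sq (ex E t.+1 v) b = set0.
  move=> b hb; apply/eqP; apply: contraNT hcl => hne.
  by rewrite orbC; apply/orP; left; apply/existsP; exists b; rewrite Hnv inE hb.
have nsq : forall a, E t.+1 v a -> sq (ex E t.+1 a) v = set0.
  move=> a ha; apply/eqP; apply: contraNT nfs => hne.
  by apply: (sq_next_flag HE _ hne); rewrite HE.2.1.
case: (Inv_all HE hvx hvw hxw) => [// | [h | [h | [h | h]]]].
- by move: h; rewrite nsq // inE.
- by move: h; rewrite nsq // inE.
- by move: (subsetP (Hsub w) x h); rewrite nex // inE.
- by move: (subsetP (Hsub x) w h); rewrite nex // inE.
Qed.

Lemma answer_ok n (E : dyn_graph n) (HE : valid_dyn_graph E) t (v : 'I_n) (Q : {set 'I_n}) (b : bool) :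
  v \in Q -> nanswer (ex E t v) Q = Some b -> b = is_clique (E t) Q.
Proof.
move=> hvQ; rewrite /nanswer; case: ifP => // /negbFE hcl [<-].
have [Hm Hnv _] := basic HE t v.
have Hs := HE.2.1.
rewrite Hm Hnv.
apply/idP/idP.
  case/andP => /forallP h1 /forallP h2.
  have h1' : forall u, u \in Q -> u != v -> E t v u.
    by move=> u hu nu; move: (h1 u); rewrite hu nu inE.
  apply/forallP => x; apply/implyP => hx; apply/forallP => w; apply/implyP => hw.
  apply/implyP => hxw.
  case: (eqVneq x v) => [ex | nx]; first by subst x; apply: h1' => //; rewrite eq_sym.
  case: (eqVneq w v) => [ew | nw]; first by subst w; rewrite Hs; apply: h1'.
  rewrite -(kn_correct HE hcl (h1' x hx nx) (h1' w hw nw) hxw).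
  move: (h2 x); rewrite hx /= => /forallP /(_ w); rewrite hw nx nw hxw.
  by [].
move=> /forallP hc.
have hc' : forall x w, x \in Q -> w \in Q -> x != w -> E t x w.
  by move=> x w hx hw hxw; move: (hc x); rewrite hx /= => /forallP /(_ w); rewrite hw hxw.
apply/andP; split.
  apply/forallP => u; apply/implyP => hu; apply/implyP => nu; rewrite inE.
  by apply: hc' => //; rewrite eq_sym.
apply/forallP => x; apply/implyP => hx; apply/forallP => w; apply/implyP => hw.
apply/implyP => /and3P [nx nw hxw].
rewrite (kn_correct HE hcl) //; try (apply: hc' => //; rewrite eq_sym //).
Qed.

Lemma cardU_le (T : finType) (A B : {set T}) : #|A :|: B| <= #|A| + #|B|.
Proof. exact: (leq_card_setU A B).1. Qed.

Lemma chg_card n (E : dyn_graph n) (HE : valid_dyn_graph E) t a :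
  #|chg E t a| <= changes E t.+1.
Proof.
pose f (u : 'I_n) := if a < u then (a, u) else (u, a).
have finj : injective f.
  move=> u u'; rewrite /f; case: ifP; case: ifP => _ _ [] //; by move=> -> ->.
rewrite -(card_imset (mem (chg E t a)) finj) /changes /=.
apply: subset_leq_card; apply/subsetP => e /imsetP [u hu ->].
move: hu; rewrite !inE /f => hu.
have nua : val u != val a.
  apply/eqP => /val_inj ee; move: hu; by rewrite ee !HE.2.2.
case: ifP => hau /=; first by rewrite hau eq_sym.
have hua : u < a by rewrite ltn_neqAle leqNgt hau andbT.
by rewrite hua /= (HE.2.1 t u a) (HE.2.1 t.+1 u a) eq_sym.
Qed.

Lemma evq_step n (E : dyn_graph n) (HE : valid_dyn_graph E) t a b :
  #|evq (ex E t.+1 a) b| <= #|evq (ex E t a) b| + changes E t.+1 - 1.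
Proof.
have [_ Hn _] := basic HE t a.
rewrite ex_succ evq_recv (nb_n1 Hn) inE; case: ifP => h; last by rewrite cards0.
rewrite card_pop_evq ?sub_n1 // evq_n1 // h; apply: leq_sub2r.
apply: leq_trans (cardU_le _ _) _; rewrite leq_add2l.
apply: leq_trans (chg_card HE t a); apply: subset_leq_card; exact: subsetDl.
Qed.

Lemma sq_step n (E : dyn_graph n) (HE : valid_dyn_graph E) t a b :
  #|sq (ex E t.+1 a) b| <= (#|sq (ex E t a) b| + changes E t.+1 - 1) + (evq (n1 E t b) a != set0).
Proof.
have [_ Hn _] := basic HE t a.
rewrite ex_succ sq_recv (nb_n1 Hn) inE; case: ifP => h; last by rewrite cards0.
apply: leq_trans (cardU_le _ _) _; apply: leq_add.
  rewrite card_pop_sq ?sub_n1 // sq_n1 // h; apply: leq_sub2r.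
  apply: leq_trans (cardU_le _ _) _; rewrite leq_add2l.
  apply: leq_trans (chg_card HE t a); apply: subset_leq_card; exact: subsetDl.
have hba : E t.+1 b a by rewrite HE.2.1.
rewrite (msg_some hba) mkind_snd; case: ifP => _; last by rewrite cards0.
by case: (mtopic _ _) => [y|]; rewrite ?cards1 ?cards0.
Qed.

Lemma evq_n1_card n (E : dyn_graph n) (HE : valid_dyn_graph E) t b a :
  evq (n1 E t b) a != set0 -> 0 < #|evq (ex E t b) a| + changes E t.+1.
Proof.
have [_ Hn _] := basic HE t b.
rewrite -card_gt0 evq_n1 //; case: ifP => _; last by rewrite cards0.
move=> h; apply: leq_trans h _; apply: leq_trans (cardU_le _ _) _; rewrite leq_add2l.
apply: leq_trans (chg_card HE t b); apply: subset_leq_card; exact: subsetDl.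
Qed.

Definition Pm n (E : dyn_graph n) t := \max_(p : 'I_n * 'I_n) #|sq (ex E t p.1) p.2|.
Definition Qm n (E : dyn_graph n) t := \max_(p : 'I_n * 'I_n) #|evq (ex E t p.1) p.2|.

Lemma Q_step n (E : dyn_graph n) (HE : valid_dyn_graph E) t :
  Qm E t.+1 <= Qm E t + changes E t.+1 - 1.
Proof.
apply/bigmax_leqP => p _; apply: leq_trans (evq_step HE t p.1 p.2) _.
apply: leq_sub2r; rewrite leq_add2r.
rewrite /Qm /Pm; apply: (@leq_bigmax _ (fun p : 'I_n * 'I_n => #|evq (ex E t p.1) p.2|)).
Qed.

Lemma P_step n (E : dyn_graph n) (HE : valid_dyn_graph E) t :
  Pm E t.+1 <= (Pm E t + changes E t.+1 - 1) + (0 < Qm E t + changes E t.+1).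
Proof.
apply/bigmax_leqP => p _; apply: leq_trans (sq_step HE t p.1 p.2) _.
apply: leq_add.
  apply: leq_sub2r; rewrite leq_add2r.
  rewrite /Qm /Pm; apply: (@leq_bigmax _ (fun p : 'I_n * 'I_n => #|sq (ex E t p.1) p.2|)).
case hb: (evq (n1 E t p.2) p.1 != set0) => //.
have h := evq_n1_card HE hb.
have : 0 < Qm E t + changes E t.+1.
  apply: leq_trans h _; rewrite leq_add2r.
  rewrite /Qm; move: (@leq_bigmax _ (fun p : 'I_n * 'I_n => #|evq (ex E t p.1) p.2|) (p.2, p.1)).
  by [].
by move=> ->.
Qed.

Lemma Pm_pos n (E : dyn_graph n) t a b : sq (ex E t a) b != set0 -> 0 < Pm E t.
Proof.
rewrite -card_gt0 => h; apply: leq_trans h _; rewrite /Pm.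
by move: (@leq_bigmax _ (fun p : 'I_n * 'I_n => #|sq (ex E t p.1) p.2|) (a, b)).
Qed.

Lemma inc_pos n (E : dyn_graph n) (HE : valid_dyn_graph E) k t :
  round_inconsistent k (alg n) E t.+1 -> 0 < Pm E t.+1.
Proof.
case/existsP => v /existsP [Q /andP [_ /eqP h]].
have : ~~ nclean (ex E t.+1 v).
  by move: h; rewrite /= /nanswer; case: ifP.
rewrite /nclean negbK; case/orP; first case/orP.
- rewrite ex_succ sentev_recv => /existsP [b /andP [hb hne]].
  have [_ Hnv _] := basic HE t v; have [_ Hnb _] := basic HE t b.
  move: hb; rewrite (nb_n1 Hnv) inE => hvb.
  have hbv : E t.+1 b v by rewrite HE.2.1.
  have [y hy] : exists y, hd_ (n1 E t v) b = Some y.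
    move: hne; rewrite /hd_ => hne; rewrite hne; case: pickP => [y _|h0]; first by exists y.
    case/set0Pn: hne => z hz; move: (h0 z); by rewrite /= hz.
  apply: (@Pm_pos _ _ _ b v); apply/set0Pn; exists y.
  rewrite ex_succ sq_recv (nb_n1 Hnb) inE hbv (msg_some hvb) mkind_snd hne mtopic_snd hy.
  by apply/setUP; right; rewrite inE.
- rewrite ex_succ flg_recv => /existsP [u].
  rewrite /msg; case huv: (E t.+1 u v) => //; rewrite mmore_snd => hc.
  have [_ Hnu _] := basic HE t u.
  apply: (@Pm_pos _ _ _ u v); rewrite -card_gt0.
  rewrite ex_succ sq_recv (nb_n1 Hnu) inE huv.
  apply: leq_trans (subset_leq_card (subsetUl _ _)).
  rewrite card_pop_sq; last exact: sub_n1.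
  by move: hc; rewrite /msg; lia.
- case/existsP => b /andP [_ hb]; exact: (Pm_pos hb).
Qed.

Lemma pot n (E : dyn_graph n) (HE : valid_dyn_graph E) k t :
  inconsistent_rounds k (alg n) E t + (Pm E t + 2 * Qm E t) <= 3 * total_changes E t.
Proof.
elim: t => [|t IH].
  rewrite /inconsistent_rounds /total_changes !big_geq //.
  have -> : Pm E 0 = 0.
    apply/eqP; rewrite -leqn0; apply/bigmax_leqP => p _; by rewrite ex0 /= cards0.
  have -> : Qm E 0 = 0.
    apply/eqP; rewrite -leqn0; apply/bigmax_leqP => p _; by rewrite ex0 /= cards0.
  by [].
move: IH; rewrite /inconsistent_rounds /total_changes.
rewrite (big_nat_recr t.+1) // (big_nat_recr t.+1) //=.
set IR := \sum_(1 <= j < t.+1) _; set TC := \sum_(1 <= j < t.+1) _ => IH.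
have hQ := Q_step HE t; have hP := P_step HE t.
have hi : round_inconsistent k (alg n) E t.+1 -> 0 < Pm E t.+1 := @inc_pos n E HE k t.
move: hP; case h0: (0 < Qm E t + changes E t.+1) => /= hP;
move: hi; case: (round_inconsistent k (alg n) E t.+1) => /= hi.
- have := hi isT; lia.
- lia.
- have := hi isT; lia.
- lia.
Qed.

Theorem corollary2 :
  forall k : nat, 3 <= k ->
  exists cB cR : nat, forall n : nat,
  exists A : dyn_alg n (cB * (trunc_log 2 n).+1),
  forall E : dyn_graph n, valid_dyn_graph E ->
    kclique_correct k A E /\
    (forall i : nat, inconsistent_rounds k A E i <= cR * total_changes E i).
Proof.
move=> k _; exists 5, 3 => n; exists (alg n) => E HE; split.
  move=> i v Q b hv _ h; exact: (answer_ok HE hv h).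
move=> i; have := pot HE k i; lia.
Qed.
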